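(* Let $\eta>0$, $n\ge1$, $b\in\{1,\dots,n\}$. Let $X_n=(x_1,\dots,x_n)$ and $\hat X_n=(\hat x_1,\dots,\hat x_n)$ with $x_i=(a_i,y_i)$, $\hat x_i=(\hat a_i,\hat y_i)\in\mathcal{X}\subseteq\mathbb{R}^d\times\mathbb{R}$, differing in at most one index, and assume $\sup_{x\in\mathcal{X}}\Vert x\Vert\le D<\infty$. Let $(\Omega_k)_{k\ge1}$ be i.i.d. uniformly random subsets of $\{1,\dots,n\}$ of cardinality $b$, $H_k=\sum_{i\in\Omega_k}a_ia_i^\top$, $q_k=\sum_{i\in\Omega_k}a_iy_i$, $\hat H_k=\sum_{i\in\Omega_k}\hat a_i\hat a_i^\top$, $\hat q_k=\sum_{i\in\Omega_k}\hat a_i\hat y_i$, and consider $$\theta_k=\left(I-\tfrac{\eta}{b}H_k\right)\theta_{k-1}+\tfrac{\eta}{b}q_k,\qquad\hat\theta_k=\left(I-\tfrac{\eta}{b}\hat H_k\right)\hat\theta_{k-1}+\tfrac{\eta}{b}\hat q_k,$$ with $\theta_0=\hat\theta_0=\theta\in\mathbb{R}^d$. Assume $\rho:=\mathbb{E}\Vert I-\frac{\eta}{b}H_1\Vert<1$ and $\hat\rho:=\mathbb{E}\Vert I-\frac{\eta}{b}\hat H_1\Vert<1$. Let $\nu_k,\hat\nu_k$ be the laws of $\theta_k,\hat\theta_k$. Then for every $k$, $$\mathcal{W}_1(\nu_k,\hat\nu_k)\le\frac{1-\rho^k}{1-\rho}\cdot\frac{2\eta D^2}{n}\max\left\{1+\Vert\theta\Vert,\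 \frac{1-\hat\rho+\frac{\eta}{b}\mathbb{E}\Vert\hat q_1\Vert}{1-\hat\rho}\right\}.$$
   Context: This is minibatch SGD for the quadratic loss $f(\theta,(a,y))=(a^\top\theta-y)^2/2$ on two datasets differing in at most one point. Matrix norms are operator norms; $\mathcal{W}_1$ is the 1-Wasserstein distance. *)

(* Defs.v *)
From HB Require Import structures.
From mathcomp Require Import all_boot all_order all_algebra.
From mathcomp Require Import classical_sets reals.
Set Implicit Arguments. Unset Strict Implicit. Unset Printing Implicit Defensive.
Import Order.TTheory GRing.Theory Num.Theory.
Local Open Scope ring_scope.
Local Open Scope classical_set_scope.

Section Defs.
Variable R : realType.

Definition vnorm (d : nat) (v : 'cV[R]_d) : R := Num.sqrt (\sum_i v i 0 ^+ 2).

Definition pnorm (d : nat) (x : 'cV[R]_d * R) : R :=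
  Num.sqrt (\sum_i x.1 i 0 ^+ 2 + x.2 ^+ 2).

Definition opnorm (d : nat) (M : 'M[R]_d) : R :=
  sup [set vnorm (M *m v) | v in [set v : 'cV[R]_d | vnorm v <= 1]].

Definition Hmat (n d : nat) (a : 'I_n -> 'cV[R]_d) (A : {set 'I_n}) : 'M[R]_d :=
  \sum_(i in A) a i *m (a i)^T.
Definition qvec (n d : nat) (a : 'I_n -> 'cV[R]_d) (y : 'I_n -> R)
    (A : {set 'I_n}) : 'cV[R]_d :=
  \sum_(i in A) y i *: a i.

Definition sgd_step (n d b : nat) (eta : R) (a : 'I_n -> 'cV[R]_d) (y : 'I_n -> R)
    (th : 'cV[R]_d) (A : {set 'I_n}) : 'cV[R]_d :=
  (1%:M - (eta / b%:R) *: Hmat a A) *m th + (eta / b%:R) *: qvec a y A.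
Definition sgd_iter (n d b : nat) (eta : R) (a : 'I_n -> 'cV[R]_d) (y : 'I_n -> R)
    (th0 : 'cV[R]_d) (s : seq {set 'I_n}) : 'cV[R]_d :=
  foldl (sgd_step b eta a y) th0 s.

(* theta_k as a function of the minibatch sample (Omega_1, ..., Omega_k) *)
Definition theta_k (n d b k : nat) (eta : R) (a : 'I_n -> 'cV[R]_d) (y : 'I_n -> R)
    (th0 : 'cV[R]_d) (om : {ffun 'I_k -> {set 'I_n}}) : 'cV[R]_d :=
  sgd_iter b eta a y th0 (codom om).

Definition nbatches (n b : nat) : nat := #|[set A : {set 'I_n} | #|A| == b]|.

Definition Ebatch (n b : nat) (f : {set 'I_n} -> R) : R :=
  (nbatches n b)%:R^-1 * \sum_(A : {set 'I_n} | #|A| == b) f A.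

Definition sample_prob (n b k : nat) (om : {ffun 'I_k -> {set 'I_n}}) : R :=
  if [forall i, #|om i| == b] then ((nbatches n b)%:R ^- k) else 0.

(* 1-Wasserstein distance between the laws of X (under weights p on I) and
   of Y (under weights q on J): infimum of the transport cost over all
   couplings.  Since the laws are finitely supported pushforwards, couplings
   of the laws correspond to couplings of the index spaces. *)
Definition W1fin (d : nat) (I J : finType) (p : I -> R) (X : I -> 'cV[R]_d)
    (q : J -> R) (Y : J -> 'cV[R]_d) : R :=
  inf [set c | exists pi : I -> J -> R,
     [/\ forall i j, 0 <= pi i j,
         forall i, \sum_j pi i j = p i,
         forall j, \sum_i pi i j = q j &
         c = \sum_i \sum_j pi i j * vnorm (X i - Y j)]].

End Defs.

(* Main.v *)
Require Import Defs.
From HB Require Import structures.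
From mathcomp Require Import all_boot all_order all_algebra perm.
From mathcomp Require Import classical_sets reals boolp.
From mathcomp Require Import ring lra.
Import Order.TTheory GRing.Theory Num.Theory.
Local Open Scope ring_scope.
Local Open Scope classical_set_scope.
Set Implicit Arguments. Unset Strict Implicit.

Lemma sum_prod (R : realType) (I J : finType) (f : I -> R) (g : J -> R) :
  \sum_i \sum_j f i * g j = (\sum_i f i) * (\sum_j g j).
Proof. rewrite big_distrl; apply: eq_bigr => i _; by rewrite big_distrr. Qed.

Lemma CS (R : realType) (I : finType) (x z : I -> R) :
  (\sum_i x i * z i) ^+ 2 <= (\sum_i x i ^+ 2) * (\sum_i z i ^+ 2).
Proof.
have H : 0 <= \sum_i \sum_j (x i * z j - x j * z i) ^+ 2.
  by apply: sumr_ge0 => i _; apply: sumr_ge0 => j _; exact: sqr_ge0.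
have E : \sum_i \sum_j (x i * z j - x j * z i) ^+ 2 =
   2 * ((\sum_i x i ^+ 2) * (\sum_i z i ^+ 2) - (\sum_i x i * z i) ^+ 2).
  have E1 : forall i j, (x i * z j - x j * z i) ^+ 2 =
     x i ^+ 2 * z j ^+ 2 + z i ^+ 2 * x j ^+ 2 - 2 * (x i * z i) * (x j * z j).
    by move=> i j; ring.
  under eq_bigr do under eq_bigr do rewrite E1.
  under eq_bigr do rewrite sumrB big_split /=.
  rewrite sumrB big_split /= !sum_prod.
  rewrite -mulr_sumr; ring.
lra.
Qed.

Lemma sqrt_le_of_sq (R : realType) (x y : R) : 0 <= y -> x <= y ^+ 2 -> Num.sqrt x <= y.
Proof.
move=> y0 h; have : Num.sqrt x <= Num.sqrt (y ^+ 2) by rewrite ler_sqrt ?sqr_ge0.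
by rewrite sqrtr_sqr ger0_norm.
Qed.

Lemma vnorm_ge0 (R : realType) d (v : 'cV[R]_d) : 0 <= vnorm v.
Proof. exact: sqrtr_ge0. Qed.

Lemma vnorm_sq (R : realType) d (v : 'cV[R]_d) : vnorm v ^+ 2 = \sum_i v i 0 ^+ 2.
Proof. by rewrite sqr_sqrtr // sumr_ge0 // => i _; exact: sqr_ge0. Qed.

Definition dotv (R : realType) d (u v : 'cV[R]_d) : R := \sum_i u i 0 * v i 0.

Lemma dot_le (R : realType) d (u v : 'cV[R]_d) : `|dotv u v| <= vnorm u * vnorm v.
Proof.
rewrite -(ler_pXn2r (n := 2)) // ?nnegrE ?mulr_ge0 ?vnorm_ge0 //.
by rewrite real_normK ?num_real // exprMn !vnorm_sq /dotv; apply: CS.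
Qed.

Lemma vnormD (R : realType) d (u v : 'cV[R]_d) : vnorm (u + v) <= vnorm u + vnorm v.
Proof.
rewrite {1}/vnorm; apply: sqrt_le_of_sq; first by rewrite addr_ge0 ?vnorm_ge0.
have E : \sum_i (u + v) i 0 ^+ 2 = vnorm u ^+ 2 + vnorm v ^+ 2 + 2 * dotv u v.
  rewrite !vnorm_sq /dotv mulr_sumr -!big_split /=; apply: eq_bigr => i _.
  rewrite mxE; ring.
rewrite E; have := dot_le u v; have := ler_norm (dotv u v); nra.
Qed.

Lemma vnormZ (R : realType) d (c : R) (v : 'cV[R]_d) : vnorm (c *: v) = `|c| * vnorm v.
Proof.
rewrite /vnorm -sqrtr_sqr -sqrtrM ?sqr_ge0 //; congr Num.sqrt.
by rewrite mulr_sumr; apply: eq_bigr => i _; rewrite mxE exprMn.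
Qed.

Lemma vnormN (R : realType) d (v : 'cV[R]_d) : vnorm (- v) = vnorm v.
Proof. by rewrite -scaleN1r vnormZ normrN normr1 mul1r. Qed.

Lemma vnormB (R : realType) d (u v : 'cV[R]_d) : vnorm (u - v) <= vnorm u + vnorm v.
Proof. by rewrite -(vnormN v) vnormD. Qed.

Lemma vnorm0 (R : realType) d : vnorm (0 : 'cV[R]_d) = 0.
Proof. by rewrite -(scale0r (0 : 'cV[R]_d)) vnormZ normr0 mul0r. Qed.

Definition frob (R : realType) d (M : 'M[R]_d) : R := Num.sqrt (\sum_i \sum_j M i j ^+ 2).

Lemma mulmx_le_frob (R : realType) d (M : 'M[R]_d) v : vnorm (M *m v) <= frob M * vnorm v.
Proof.
rewrite {1}/vnorm; apply: sqrt_le_of_sq; first by rewrite mulr_ge0 ?vnorm_ge0 ?sqrtr_ge0.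
rewrite exprMn vnorm_sq sqr_sqrtr; last by do 2 (apply: sumr_ge0 => ? _); exact: sqr_ge0.
rewrite big_distrl /=; apply: ler_sum => i _; rewrite mxE.
have := @CS R _ (fun j => M i j) (fun j => v j 0); apply.
Qed.

Lemma opnorm_ub (R : realType) d (M : 'M[R]_d) :
  has_ubound [set vnorm (M *m v) | v in [set v : 'cV[R]_d | vnorm v <= 1]].
Proof.
exists (frob M) => _ [v /= hv <-].
apply: le_trans (mulmx_le_frob M v) _.
by rewrite -[X in _ <= X]mulr1 ler_wpM2l // sqrtr_ge0.
Qed.

Lemma opnorm_ge0 (R : realType) d (M : 'M[R]_d) : 0 <= opnorm M.
Proof.
apply: ub_le_sup (opnorm_ub M) _ _; exists 0 => /=; first by rewrite vnorm0.
by rewrite mulmx0 vnorm0.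
Qed.

Lemma opnorm_le (R : realType) d (M : 'M[R]_d) v : vnorm (M *m v) <= opnorm M * vnorm v.
Proof.
have [v0|vpos] := eqVneq (vnorm v) 0.
  have := mulmx_le_frob M v; rewrite v0 mulr0 => h.
  by rewrite mulr0; apply: le_trans h _.
have vp : 0 < vnorm v by rewrite lt_def vpos vnorm_ge0.
have h : vnorm (M *m ((vnorm v)^-1 *: v)) <= opnorm M.
  apply: ub_le_sup (opnorm_ub M) _ _; exists ((vnorm v)^-1 *: v) => //=.
  by rewrite vnormZ ger0_norm ?invr_ge0 ?vnorm_ge0 // mulVf.
rewrite -scalemxAr vnormZ ger0_norm ?invr_ge0 ?vnorm_ge0 // in h.
by rewrite -ler_pdivrMr // mulrC.
Qed.

Definition wgt (R : realType) n b (A : {set 'I_n}) : R :=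
  if #|A| == b then (nbatches n b)%:R^-1 else 0.

Lemma sample_prod (R : realType) n b k (om : {ffun 'I_k -> {set 'I_n}}) :
  @sample_prob R n b k om = \prod_i wgt R b (om i).
Proof.
rewrite /sample_prob /wgt; case: forallP => [h|h].
  rewrite (eq_bigr (fun _ => (nbatches n b)%:R^-1)); last by move=> i _; rewrite h.
  by rewrite prodr_const card_ord exprVn.
have [i hi] : exists i, ~~ (#|om i| == b).
  by apply/existsP; rewrite -negb_forall; apply/negP => /forallP.
by rewrite (bigD1 i) //= ifN // mul0r.
Qed.

Definition ext n k (f : {ffun 'I_k -> {set 'I_n}}) (A : {set 'I_n}) :
  {ffun 'I_k.+1 -> {set 'I_n}} :=
  [ffun i => if unlift ord_max i is Some j then f j else A].

Definition restr n k (om : {ffun 'I_k.+1 -> {set 'I_n}}) :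
  {ffun 'I_k -> {set 'I_n}} * {set 'I_n} :=
  ([ffun j => om (lift ord_max j)], om ord_max).

Lemma ext_widen n k f A (j : 'I_k) :
  @ext n k f A (widen_ord (leqnSn k) j) = f j.
Proof.
have -> : widen_ord (leqnSn k) j = lift ord_max j by apply: val_inj => /=; rewrite /bump leqNgt ltn_ord.
by rewrite ffunE liftK.
Qed.

Lemma ext_max n k f A : @ext n k f A ord_max = A.
Proof. by rewrite ffunE unlift_none. Qed.

Lemma codom_ext n k f A : codom (@ext n k f A) = rcons (codom f) A.
Proof.
rewrite !codomE enum_ordSr map_rcons ext_max -map_comp; congr rcons.
by apply: eq_map => j /=; rewrite ext_widen.
Qed.

Lemma ext_bij n k : bijective (fun p => @ext n k p.1 p.2).
Proof.
exists (@restr n k).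
  move=> [f A]; rewrite /restr /= ext_max; congr pair.
  by apply/ffunP => j; rewrite !ffunE liftK.
move=> om; apply/ffunP => i; rewrite /restr /= ffunE.
by case: unliftP => [j ->|->]; rewrite ?ffunE.
Qed.

Lemma sample_ext (R : realType) n b k f A :
  @sample_prob R n b k.+1 (@ext n k f A) = @sample_prob R n b k f * wgt R b A.
Proof.
rewrite !sample_prod big_ord_recr /= ext_max; congr (_ * _).
by apply: eq_bigr => j _; rewrite ext_widen.
Qed.

Definition Ek (R : realType) n b k (F : {ffun 'I_k -> {set 'I_n}} -> R) : R :=
  \sum_om @sample_prob R n b k om * F om.

Lemma Ebatch_wgt (R : realType) n b (F : {set 'I_n} -> R) :
  \sum_A wgt R b A * F A = Ebatch b F.
Proof.
rewrite /Ebatch /wgt mulr_sumr [RHS]big_mkcond /=; apply: eq_bigr => A _.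
by case: ifP; rewrite ?mul0r.
Qed.

Lemma Esplit (R : realType) n b k (G : seq {set 'I_n} -> R) :
  Ek b (fun om : {ffun 'I_k.+1 -> _} => G (codom om)) =
  Ek b (fun om : {ffun 'I_k -> _} => Ebatch b (fun A => G (rcons (codom om) A))).
Proof.
rewrite /Ek (reindex (fun p => @ext n k p.1 p.2)) /=; last first.
  exact: (onW_bij _ (@ext_bij n k)).
rewrite -(pair_bigA _ (fun f A => @sample_prob R n b k.+1 (ext f A) * G (codom (ext f A)))) /=.
apply: eq_bigr => f _; rewrite -Ebatch_wgt mulr_sumr; apply: eq_bigr => A _.
by rewrite sample_ext codom_ext mulrA.
Qed.

Lemma nbE n b : nbatches n b = #|[set A : {set 'I_n} | #|A| == b]%SET|.
Proof.
apply: eq_card => A; rewrite inE /= /in_set /=; exact: asboolb.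
Qed.

Lemma nb_gt0 n b : (b <= n)%N -> (0 < nbatches n b)%N.
Proof. by move=> h; rewrite nbE card_draws card_ord bin_gt0. Qed.

Lemma Ebatch_const (R : realType) n b (c : R) : (b <= n)%N -> @Ebatch R n b (fun _ => c) = c.
Proof.
move=> h; rewrite /Ebatch.
rewrite (eq_bigl (fun A => A \in [set A : {set 'I_n} | #|A| == b]%SET)); last by move=> A; rewrite inE.
rewrite sumr_const -nbE -[c *+ _]mulr_natr mulrC -mulrA mulfV ?mulr1 //.
by rewrite pnatr_eq0 -lt0n nb_gt0.
Qed.

Lemma Ebatch_le (R : realType) n b (f g : {set 'I_n} -> R) :
  (forall A : {set 'I_n}, #|A| = b -> f A <= g A) -> Ebatch b f <= Ebatch b g.
Proof.
move=> h; rewrite /Ebatch ler_wpM2l ?invr_ge0 ?ler0n //.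
by apply: ler_sum => A /eqP; exact: h.
Qed.

Lemma EbatchD (R : realType) n b (f g : {set 'I_n} -> R) :
  Ebatch b (fun A => f A + g A) = Ebatch b f + Ebatch b g.
Proof. by rewrite /Ebatch big_split mulrDr. Qed.

Lemma EbatchZ (R : realType) n b (c : R) (f : {set 'I_n} -> R) :
  Ebatch b (fun A => c * f A) = c * Ebatch b f.
Proof. by rewrite /Ebatch -mulr_sumr mulrCA. Qed.

Lemma sample_ge0 (R : realType) n b k om : 0 <= @sample_prob R n b k om.
Proof. by rewrite /sample_prob; case: ifP => // _; rewrite invr_ge0 exprn_ge0. Qed.

Lemma Ek_le (R : realType) n b k (f g : {ffun 'I_k -> {set 'I_n}} -> R) :
  (forall om, f om <= g om) -> Ek b f <= Ek b g.
Proof. by move=> h; apply: ler_sum => om _; rewrite ler_wpM2l ?sample_ge0. Qed.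

Lemma EkD (R : realType) n b k (f g : {ffun 'I_k -> {set 'I_n}} -> R) :
  Ek b (fun om => f om + g om) = Ek b f + Ek b g.
Proof. by rewrite /Ek -big_split; apply: eq_bigr => om _; rewrite mulrDr. Qed.

Lemma EkZ (R : realType) n b k (c : R) (f : {ffun 'I_k -> {set 'I_n}} -> R) :
  Ek b (fun om => c * f om) = c * Ek b f.
Proof. by rewrite /Ek mulr_sumr; apply: eq_bigr => om _; rewrite mulrCA. Qed.

Lemma Ek_const (R : realType) n b k (c : R) : (b <= n)%N ->
  Ek b (fun _ : {ffun 'I_k -> {set 'I_n}} => c) = c.
Proof.
move=> h; elim: k => [|k IH].
  rewrite /Ek (big_pred1 ([ffun => @finset.set0 _] : {ffun 'I_0 -> {set 'I_n}})); last first.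
    by move=> om; symmetry; apply/eqP/ffunP => -[].
  rewrite /sample_prob; case: forallP => [_|[]]; last by case.
  by rewrite expr0 invr1 mul1r.
rewrite (@Esplit R n b k (fun _ => c)) Ebatch_const //.
Qed.

Lemma EbatchZr (R : realType) n b (c : R) (f : {set 'I_n} -> R) :
  Ebatch b (fun A => f A * c) = Ebatch b f * c.
Proof. by rewrite /Ebatch -mulrA mulr_suml. Qed.

Lemma Ebatch_ge0 (R : realType) n b (f : {set 'I_n} -> R) :
  (forall A, 0 <= f A) -> 0 <= Ebatch b f.
Proof. by move=> h; rewrite /Ebatch mulr_ge0 ?invr_ge0 ?ler0n // sumr_ge0. Qed.

Definition Sj (R : realType) n b (j : 'I_n) : R :=
  \sum_(A : {set 'I_n} | #|A| == b) (j \in A)%:R.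

Lemma Sj_sym (R : realType) n b (j j' : 'I_n) : Sj R b j = Sj R b j'.
Proof.
rewrite /Sj (reindex_inj (h := fun A : {set 'I_n} => (tperm j j') @: A)) /=; last first.
  apply: (can_inj (g := fun A : {set 'I_n} => (tperm j j') @: A)) => A.
  rewrite -imset_comp (eq_imset (g := id)) ?imset_id // => x /=.
  exact: tpermK.
apply: eq_big => A.
  by rewrite card_imset //; exact: perm_inj.
move=> _; congr (_%:R).
by rewrite -{1}(tpermR j j') mem_imset //; exact: perm_inj.
Qed.

Lemma sum_Sj (R : realType) n b :
  \sum_(j : 'I_n) Sj R b j = b%:R * (nbatches n b)%:R.
Proof.
rewrite /Sj exchange_big /=.
rewrite (eq_bigr (fun _ => b%:R)); last first.
  move=> A /eqP <-; rewrite -sum1_card natr_sum [RHS]big_mkcond /=.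
  by apply: eq_bigr => i _; case: (i \in A).
rewrite (eq_bigl (fun A => A \in [set A : {set 'I_n} | #|A| == b]%SET)); last by move=> A; rewrite inE.
by rewrite sumr_const -nbE mulr_natr.
Qed.

Lemma Ebatch_mem (R : realType) n b (j : 'I_n) : (b <= n)%N ->
  Ebatch b (fun A => ((j \in A)%:R : R)) = b%:R / n%:R.
Proof.
move=> hb.
have hn : (0 < n)%N by case: n j hb => [[]|].
have E : n%:R * Sj R b j = b%:R * (nbatches n b)%:R.
  rewrite -sum_Sj (eq_bigr (fun _ => Sj R b j)); last by move=> i _; exact: Sj_sym.
  by rewrite sumr_const card_ord mulr_natl.
have N0 : (nbatches n b)%:R != 0 :> R by rewrite pnatr_eq0 -lt0n nb_gt0.
have n0 : n%:R != 0 :> R by rewrite pnatr_eq0 -lt0n.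
rewrite /Ebatch -/(Sj R b j).
apply: (mulfI n0); rewrite mulrCA E; field; by apply/andP.
Qed.

Lemma step_norm (R : realType) n d b (eta : R) (a : 'I_n -> 'cV[R]_d) y th A :
  0 <= eta / b%:R ->
  vnorm (sgd_step b eta a y th A) <=
  opnorm (1%:M - (eta / b%:R) *: Hmat a A) * vnorm th + eta / b%:R * vnorm (qvec a y A).
Proof.
move=> c0; rewrite /sgd_step; apply: le_trans (vnormD _ _) _.
by rewrite vnormZ ger0_norm // lerD2r opnorm_le.
Qed.

Lemma zmod_rearr (V : zmodType) (x y z u v : V) :
  (x + u) - (z + v) = (x - y) + ((y - z) + (u - v)).
Proof.
by rewrite [RHS]addrA -[(x - y) + _]addrA addKr opprD addrACA.
Qed.

Lemma step_diff (R : realType) n d b (eta : R) (a ah : 'I_n -> 'cV[R]_d) y yh th th' A :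
  0 <= eta / b%:R ->
  vnorm (sgd_step b eta a y th A - sgd_step b eta ah yh th' A) <=
  opnorm (1%:M - (eta / b%:R) *: Hmat a A) * vnorm (th - th') +
  eta / b%:R * (vnorm ((Hmat ah A - Hmat a A) *m th') + vnorm (qvec a y A - qvec ah yh A)).
Proof.
move=> c0; rewrite /sgd_step.
set c := eta / b%:R.
set P := 1%:M - c *: Hmat a A.
set P' := 1%:M - c *: Hmat ah A.
have E : P *m th' - P' *m th' + (c *: qvec a y A - c *: qvec ah yh A) =
   c *: ((Hmat ah A - Hmat a A) *m th' + (qvec a y A - qvec ah yh A)).
  rewrite -mulmxBl scalerDr scalemxAl scalerBr; congr (_ *m _ + _).
  by rewrite /P /P' opprB addrC addrA addrNK.
  by rewrite scalerBr.
rewrite (zmod_rearr (P *m th) (P *m th') (P' *m th') (c *: qvec a y A)) -mulmxBr E.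
apply: le_trans (vnormD _ _) _; rewrite vnormZ ger0_norm //.
by apply: lerD; [exact: opnorm_le | rewrite ler_wpM2l // vnormD].
Qed.

Lemma pt_bounds (R : realType) d (x : 'cV[R]_d * R) D :
  pnorm x <= D -> vnorm x.1 <= D /\ `|x.2| <= D.
Proof.
rewrite /pnorm => h.
have s0 : 0 <= \sum_i x.1 i 0 ^+ 2 by apply: sumr_ge0 => i _; exact: sqr_ge0.
have t0 : 0 <= \sum_i x.1 i 0 ^+ 2 + x.2 ^+ 2 by rewrite addr_ge0 ?sqr_ge0.
split; apply: le_trans h.
  by rewrite /vnorm ler_sqrt // lerDl sqr_ge0.
by rewrite -sqrtr_sqr ler_sqrt // lerDr.
Qed.

Lemma aaT_mul (R : realType) d (u v : 'cV[R]_d) : (u *m u^T) *m v = dotv u v *: u.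
Proof.
rewrite -mulmxA (mx11_scalar (u^T *m v)) mul_mx_scalar; congr (_ *: _).
by rewrite mxE /dotv; apply: eq_bigr => i _; rewrite mxE.
Qed.

Lemma Hdiff (R : realType) n d (a ah : 'I_n -> 'cV[R]_d) (y yh : 'I_n -> R) (j : 'I_n) A :
  (forall i, i != j -> a i = ah i /\ y i = yh i) ->
  Hmat ah A - Hmat a A = (j \in A)%:R *: (ah j *m (ah j)^T - a j *m (a j)^T).
Proof.
move=> hj; rewrite /Hmat -sumrB.
case: (boolP (j \in A)) => jA.
  rewrite (bigD1 j) //= big1 ?addr0 ?scale1r // => i /andP [_ ij].
  by have [-> _] := hj i ij; rewrite subrr.
rewrite big1 ?scale0r // => i iA.
have ij : i != j by apply: contraNneq jA => <-.
by have [-> _] := hj i ij; rewrite subrr.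
Qed.

Lemma qdiff (R : realType) n d (a ah : 'I_n -> 'cV[R]_d) (y yh : 'I_n -> R) (j : 'I_n) A :
  (forall i, i != j -> a i = ah i /\ y i = yh i) ->
  qvec a y A - qvec ah yh A = (j \in A)%:R *: (y j *: a j - yh j *: ah j).
Proof.
move=> hj; rewrite /qvec -sumrB.
case: (boolP (j \in A)) => jA.
  rewrite (bigD1 j) //= big1 ?addr0 ?scale1r // => i /andP [_ ij].
  by have [-> ->] := hj i ij; rewrite subrr.
rewrite big1 ?scale0r // => i iA.
have ij : i != j by apply: contraNneq jA => <-.
by have [-> ->] := hj i ij; rewrite subrr.
Qed.

Lemma cost_bound (R : realType) n d (a ah : 'I_n -> 'cV[R]_d) (y yh : 'I_n -> R) (j : 'I_n) A D th :
  (forall i, i != j -> a i = ah i /\ y i = yh i) ->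
  vnorm (a j) <= D -> vnorm (ah j) <= D -> `|y j| <= D -> `|yh j| <= D ->
  vnorm ((Hmat ah A - Hmat a A) *m th) + vnorm (qvec a y A - qvec ah yh A)
  <= (j \in A)%:R * (2 * D ^+ 2 * (1 + vnorm th)).
Proof.
move=> hj ha hah hy hyh.
have D0 : 0 <= D by apply: le_trans ha; exact: vnorm_ge0.
rewrite (Hdiff A hj) (qdiff A hj) -scalemxAl !vnormZ ger0_norm ?ler0n //.
rewrite -mulrDr ler_wpM2l ?ler0n //.
rewrite mulmxBl !aaT_mul.
have h1 : vnorm (dotv (ah j) th *: ah j - dotv (a j) th *: a j) <= 2 * D ^+ 2 * vnorm th.
  apply: le_trans (vnormB _ _) _; rewrite !vnormZ.
  have k : forall u : 'cV[R]_d, vnorm u <= D -> `|dotv u th| * vnorm u <= D ^+ 2 * vnorm th.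
    move=> u hu; apply: le_trans (ler_wpM2r (vnorm_ge0 u) (dot_le u th)) _.
    have := vnorm_ge0 u; have := vnorm_ge0 th => t0 u0.
    have : vnorm u * vnorm u <= D * D by apply: ler_pM.
    have := vnorm_ge0 th; nra.
  have := k _ ha; have := k _ hah; lra.
have h2 : vnorm (y j *: a j - yh j *: ah j) <= 2 * D ^+ 2.
  apply: le_trans (vnormB _ _) _; rewrite !vnormZ.
  have : `|y j| * vnorm (a j) <= D * D by apply: ler_pM; rewrite ?normr_ge0 ?vnorm_ge0.
  have : `|yh j| * vnorm (ah j) <= D * D by apply: ler_pM; rewrite ?normr_ge0 ?vnorm_ge0.
  lra.
have := vnorm_ge0 th; nra.
Qed.

Lemma Ek0 (R : realType) n b (G : seq {set 'I_n} -> R) : (b <= n)%N ->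
  Ek b (fun om : {ffun 'I_0 -> {set 'I_n}} => G (codom om)) = G [::].
Proof.
move=> h; rewrite -(@Ek_const R n b 0 (G [::])) //; apply: eq_bigr => om _.
have : size (codom om) = 0%N by rewrite size_codom card_ord.
by move/size0nil ->.
Qed.

Lemma iter_rcons (R : realType) n d b (eta : R) (a : 'I_n -> 'cV[R]_d) y th0 s A :
  sgd_iter b eta a y th0 (rcons s A) = sgd_step b eta a y (sgd_iter b eta a y th0 s) A.
Proof. by rewrite /sgd_iter foldl_rcons. Qed.

Lemma W1_le (R : realType) n b k d (X Y : {ffun 'I_k -> {set 'I_n}} -> 'cV[R]_d) :
  W1fin (@sample_prob R n b k) X (@sample_prob R n b k) Y <=
  Ek b (fun om => vnorm (X om - Y om)).
Proof.
rewrite /W1fin; apply: ge_inf.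
  exists 0 => _ [pi [h0 _ _ ->]].
  by do 2 (apply: sumr_ge0 => ? _); rewrite mulr_ge0 ?vnorm_ge0.
exists (fun i j => if i == j then @sample_prob R n b k i else 0); split.
- by move=> i j; case: eqP => // _; exact: sample_ge0.
- move=> i; rewrite (bigD1 i) //= eqxx big1 ?addr0 // => j.
  by rewrite eq_sym => /negbTE ->.
- move=> j; rewrite (bigD1 j) //= eqxx big1 ?addr0 // => i /negbTE ->.
  done.
- rewrite /Ek; apply: eq_bigr => i _; rewrite (bigD1 i) //= eqxx big1 ?addr0 //.
  by move=> j; rewrite eq_sym => /negbTE ->; rewrite mul0r.
Qed.

Unset Implicit Arguments.

Theorem theorem3p1 (R : realType) (d n b : nat) (eta D : R)
  (Xset : set ('cV[R]_d * R))
  (a ah : 'I_n -> 'cV[R]_d) (y yh : 'I_n -> R) (theta : 'cV[R]_d) :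
  0 < eta -> (1 <= n)%N -> (1 <= b <= n)%N ->
  (forall x, Xset x -> pnorm x <= D) ->
  (forall i, Xset (a i, y i)) -> (forall i, Xset (ah i, yh i)) ->
  (exists j : 'I_n, forall i, i != j -> a i = ah i /\ y i = yh i) ->
  let rho := @Ebatch R n b (fun A => opnorm (1%:M - (eta / b%:R) *: Hmat a A)) in
  let rhoh := @Ebatch R n b (fun A => opnorm (1%:M - (eta / b%:R) *: Hmat ah A)) in
  rho < 1 -> rhoh < 1 ->
  forall k : nat,
    W1fin (@sample_prob R n b k) (@theta_k R n d b k eta a y theta)
          (@sample_prob R n b k) (@theta_k R n d b k eta ah yh theta)
    <= (1 - rho ^+ k) / (1 - rho) * (2 * eta * D ^+ 2 / n%:R) *
       Num.max (1 + vnorm theta)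
         ((1 - rhoh + eta / b%:R * @Ebatch R n b (fun A => vnorm (qvec ah yh A)))
            / (1 - rhoh)).
Proof.
move=> eta0 n1 /andP [b1 bn] hD hX hXh [j hj] rho rhoh rho1 rhoh1 k.
have rhoE : rho = Ebatch b (fun A => opnorm (1%:M - (eta / b%:R) *: Hmat a A)) := erefl.
have rhohE : rhoh = Ebatch b (fun A => opnorm (1%:M - (eta / b%:R) *: Hmat ah A)) := erefl.
have b0 : (b%:R : R) != 0 by rewrite pnatr_eq0 -lt0n.
have c0 : 0 <= eta / b%:R by rewrite divr_ge0 ?ler0n // ltW.
have rho0 : 0 <= rho.
  by rewrite rhoE; apply: Ebatch_ge0 => A; exact: opnorm_ge0.
have rhoh0 : 0 <= rhoh.
  by rewrite rhohE; apply: Ebatch_ge0 => A; exact: opnorm_ge0.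
clearbody rho rhoh.
move: rhoE rhohE c0.
set c := eta / b%:R.
move=> rhoE rhohE c0.
have cE : c = eta / b%:R by [].
clearbody c.
set Q := Ebatch b (fun A => vnorm (qvec ah yh A)).
have QE : Q = Ebatch b (fun A => vnorm (qvec ah yh A)) := erefl.
clearbody Q.
set Mx := Num.max _ _.
have hm1 : 1 + vnorm theta <= Mx by rewrite le_max lexx.
have hm2 : (1 - rhoh + c * Q) / (1 - rhoh) <= Mx by rewrite le_max lexx orbT.
clearbody Mx.
have hm2' : 1 - rhoh + c * Q <= Mx * (1 - rhoh) by rewrite -ler_pdivrMr // subr_gt0.
have U : forall k, Ek b (fun om : {ffun 'I_k -> {set 'I_n}} =>
            vnorm (sgd_iter b eta ah yh theta (codom om))) <= Mx - 1.
  elim=> [|k' IH].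
    rewrite (@Ek0 R n b (fun s => vnorm (sgd_iter b eta ah yh theta s))) //=; clear -hm1; lra.
  rewrite (@Esplit R n b k' (fun s => vnorm (sgd_iter b eta ah yh theta s))).
  apply: (@le_trans _ _ (Ek b (fun om : {ffun 'I_k' -> {set 'I_n}} =>
     rhoh * vnorm (sgd_iter b eta ah yh theta (codom om)) + c * Q))).
    apply: Ek_le => om /=.
    apply: (@le_trans _ _ (Ebatch b (fun A => opnorm (1%:M - c *: Hmat ah A) *
        vnorm (sgd_iter b eta ah yh theta (codom om)) + c * vnorm (qvec ah yh A)))).
      by apply: Ebatch_le => A _; rewrite iter_rcons cE; apply: step_norm; rewrite -cE.
    by rewrite EbatchD EbatchZ EbatchZr -rhohE -QE.
  rewrite EkD EkZ Ek_const //.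
  have h1 := ler_wpM2l rhoh0 IH; clear -h1 hm2'; nra.
have [haj hyj] := pt_bounds (hD _ (hX j)).
have [hahj hyhj] := pt_bounds (hD _ (hXh j)).
have D0 : 0 <= D by apply: le_trans haj; exact: vnorm_ge0.
set C := 2 * eta * D ^+ 2 / n%:R.
have C0 : 0 <= C by rewrite divr_ge0 ?ler0n // !mulr_ge0 ?sqr_ge0 // ltW.
have CE : C = 2 * eta * D ^+ 2 / n%:R by [].
clearbody C.
have rho1' : 1 - rho != 0 by rewrite subr_eq0; apply/eqP => e; move: rho1; rewrite -e ltxx.
have n0 : (n%:R : R) != 0 by rewrite pnatr_eq0 -lt0n.
have Ebd : forall k, Ek b (fun om : {ffun 'I_k -> {set 'I_n}} =>
    vnorm (sgd_iter b eta a y theta (codom om) - sgd_iter b eta ah yh theta (codom om)))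
    <= (1 - rho ^+ k) / (1 - rho) * C * Mx.
  elim=> [|k' IH].
    rewrite (@Ek0 R n b (fun s => vnorm (sgd_iter b eta a y theta s - sgd_iter b eta ah yh theta s))) //=.
    by rewrite subrr vnorm0 expr0 subrr !mul0r.
  rewrite (@Esplit R n b k' (fun s => vnorm (sgd_iter b eta a y theta s - sgd_iter b eta ah yh theta s))).
  apply: (@le_trans _ _ (Ek b (fun om : {ffun 'I_k' -> {set 'I_n}} =>
     rho * vnorm (sgd_iter b eta a y theta (codom om) - sgd_iter b eta ah yh theta (codom om))
     + C * (1 + vnorm (sgd_iter b eta ah yh theta (codom om)))))).
    apply: Ek_le => om /=.
    set th := sgd_iter b eta a y theta (codom om).
    set th' := sgd_iter b eta ah yh theta (codom om).
    apply: (@le_trans _ _ (Ebatch b (fun A => opnorm (1%:M - c *: Hmat a A) * vnorm (th - th')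
        + c * ((j \in A)%:R * (2 * D ^+ 2 * (1 + vnorm th')))))).
      apply: Ebatch_le => A _; rewrite !iter_rcons.
      apply: le_trans; first by apply: step_diff; rewrite -cE.
      rewrite -cE.
      rewrite lerD2l ler_wpM2l //; exact: cost_bound.
    rewrite EbatchD EbatchZ EbatchZr EbatchZr Ebatch_mem // -rhoE CE cE.
    rewrite lerD2l le_eqVlt; apply/orP; left; apply/eqP. move: (vnorm th') => t; clear -b0 n0; field; by apply/andP.
  rewrite EkD EkZ EkZ EkD Ek_const //.
  have := ler_wpM2l rho0 IH; have := ler_wpM2l C0 (U k').
  have -> : (1 - rho ^+ k'.+1) / (1 - rho) * C * Mx =
     rho * ((1 - rho ^+ k') / (1 - rho) * C * Mx) + C * (1 + (Mx - 1)).
    by rewrite exprS; field.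
  move=> h2 h1; clear -h1 h2; lra.
apply: le_trans (Ebd k); exact: W1_le.
Qed.
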